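(* Let $P\subset\mathbb{R}^n$ be a smooth $n$-dimensional lattice polytope with codegree $c$ and nef value $\tau$. Then $\tau\in\mathbb{Q}_{>0}$ and $\tau>c-1$.
   Context: Write $P=\bigcap_{i=1}^r\{x:\langle\rho_i,x\rangle\ge -a_i\}$ with primitive inner facet normals $\rho_i$ and $a_i\in\mathbb{Z}$; $P$ is smooth if each vertex lies on exactly $n$ facet hyperplanes whose normals form a basis of $\mathbb{Z}^n$. $P^{(s)}=\bigcap_i\{\langle\rho_i,x\rangle\ge -a_i+s\}$. For a vertex $m$ with $\{m\}=\bigcap_{i=1}^n\{\langle\rho_i,x\rangle=-a_i\}$, $m(s)$ is defined by $\{m(s)\}=\bigcap_{i=1}^n\{\langle\rho_i,x\rangle=-a_i+s\}$; $P$ is $s$-spanned if $m(s)\in P^{(s)}$ for all vertices $m$. Codegree: $c=\operatorname{codeg}(P)=\min\{k\in\mathbb{N}:(kP)^{(1)}\cap\mathbb{Z}^n\ne\emptyset\}$. Nef value: $\tau=\tau(P)=\inf\{a/b: a,b\in\mathbb{Z}_{>0},\ aP\text{ is }b\text{-spanned}\}$. *)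

(* Defs.v *)
From HB Require Import structures.
From mathcomp Require Import all_boot all_order all_algebra.
From mathcomp Require Import all_classical all_reals.
Set Implicit Arguments. Unset Strict Implicit. Unset Printing Implicit Defensive.
Import Order.TTheory GRing.Theory Num.Theory.
Local Open Scope classical_set_scope.
Local Open Scope ring_scope.

Section PolytopeDefs.
Variables (R : realType) (n r : nat).

Definition pairing (rho : 'rV[int]_n) (x : 'rV[R]_n) : R :=
  \sum_(j < n) (rho 0 j)%:~R * x 0 j.

Definition poly (rho : 'I_r -> 'rV[int]_n) (a : 'I_r -> int) : set 'rV[R]_n :=
  [set x | forall i, - (a i)%:~R <= pairing (rho i) x].

Definition shiftP (rho : 'I_r -> 'rV[int]_n) (a : 'I_r -> int) (s : int) :=
  poly rho (fun i => a i - s).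

Definition dil (a : 'I_r -> int) (k : int) : 'I_r -> int := fun i => k * a i.

Definition lattice_point (x : 'rV[R]_n) : Prop :=
  exists z : 'rV[int]_n, x = map_mx (fun t : int => t%:~R) z.

Definition primitive (v : 'rV[int]_n) : Prop :=
  forall (k : int) (w : 'rV[int]_n), v = k *: w -> `|k| = 1.

Definition affdim_ge (S : set 'rV[R]_n) (d : nat) : Prop :=
  exists p : 'I_d.+1 -> 'rV[R]_n, (forall k, S (p k)) /\
    \rank (\matrix_(k < d) (p (lift ord0 k) - p ord0)) = d.

Definition affdim (S : set 'rV[R]_n) (d : nat) : Prop :=
  affdim_ge S d /\ ~ affdim_ge S d.+1.

Definition bounded (S : set 'rV[R]_n) : Prop :=
  exists M : R, forall x, S x -> forall j, `|x 0 j| <= M.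

Definition is_vertex (S : set 'rV[R]_n) (m : 'rV[R]_n) : Prop :=
  S m /\ forall x y (t : R), S x -> S y -> 0 < t -> t < 1 ->
    m = t *: x + (1 - t) *: y -> x = y.

Definition face_of (rho : 'I_r -> 'rV[int]_n) (a : 'I_r -> int) (i : 'I_r) :
  set 'rV[R]_n :=
  [set x | poly rho a x /\ pairing (rho i) x = - (a i)%:~R].

Definition lattice_polytope_facets (rho : 'I_r -> 'rV[int]_n) (a : 'I_r -> int)
  : Prop :=
  bounded (poly rho a) /\
  affdim_ge (poly rho a) n /\
  (forall m, is_vertex (poly rho a) m -> lattice_point m) /\
  injective rho /\
  (forall i, primitive (rho i)) /\
  (forall i, affdim (face_of rho a i) n.-1).

Definition Zbasis (f : 'I_n -> 'rV[int]_n) : Prop :=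
  (forall v : 'rV[int]_n, exists c : 'I_n -> int, v = \sum_(k < n) c k *: f k) /\
  (forall c : 'I_n -> int, \sum_(k < n) c k *: f k = 0 -> forall k, c k = 0).

Definition smooth (rho : 'I_r -> 'rV[int]_n) (a : 'I_r -> int) : Prop :=
  forall m, is_vertex (poly rho a) m ->
    exists e : 'I_n -> 'I_r, [/\ injective e,
      (forall i, pairing (rho i) m = - (a i)%:~R <-> exists k, e k = i) &
      Zbasis (fun k => rho (e k))].

(* s-spanned: for each vertex m, the point m(s) (the intersection of the
   shifted hyperplanes of the facets through m) lies in P^{(s)} *)
Definition spanned (rho : 'I_r -> 'rV[int]_n) (a : 'I_r -> int) (s : int) : Prop :=
  forall m, is_vertex (poly rho a) m ->
    forall x : 'rV[R]_n,
      (forall i, pairing (rho i) m = - (a i)%:~R ->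
                 pairing (rho i) x = - (a i)%:~R + s%:~R) ->
      shiftP rho a s x.

Definition is_codegree (rho : 'I_r -> 'rV[int]_n) (a : 'I_r -> int) (c : nat) : Prop :=
  (exists x, lattice_point x /\ shiftP rho (dil a c%:Z) 1 x) /\
  (forall k : nat, (k < c)%N ->
     ~ exists x, lattice_point x /\ shiftP rho (dil a k%:Z) 1 x).

Definition nef_value (rho : 'I_r -> 'rV[int]_n) (a : 'I_r -> int) : R :=
  inf [set t : R | exists p q : nat, [/\ (0 < p)%N, (0 < q)%N,
        t = p%:R / q%:R & spanned rho (dil a p%:Z) q%:Z]].

End PolytopeDefs.

(* Main.v *)
From Pilot Require Import Defs.
From HB Require Import structures.
From mathcomp Require Import all_boot all_order all_algebra.
From mathcomp Require Import all_classical all_reals.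
From mathcomp Require Import lra.
From Stdlib Require Import Classical.
Import Order.TTheory GRing.Theory Num.Theory.
Local Open Scope ring_scope.
Local Notation polyh := Pilot.Defs.poly.

Section Aux.
Variables (R : realType) (n r : nat).
Implicit Types (u : 'rV[int]_n) (x y : 'rV[R]_n).

Lemma pairingD u x y : pairing u (x + y) = pairing u x + pairing u y.
Proof. by rewrite /pairing -big_split; apply: eq_bigr => j _; rewrite mxE mulrDr. Qed.

Lemma pairingZ u (k : R) x : pairing u (k *: x) = k * pairing u x.
Proof. by rewrite /pairing mulr_sumr; apply: eq_bigr => j _; rewrite mxE mulrCA. Qed.

Lemma pairingN u x : pairing u (- x) = - pairing u x.
Proof. by rewrite -scaleN1r pairingZ mulN1r. Qed.

Lemma pairingB u x y : pairing u (x - y) = pairing u x - pairing u y.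
Proof. by rewrite pairingD pairingN. Qed.

Lemma pairing0 u : pairing u (0 : 'rV[R]_n) = 0.
Proof. by rewrite /pairing big1 // => j _; rewrite mxE mulr0. Qed.

Lemma pairing_sum (m : nat) (c : 'I_m -> int) (f : 'I_m -> 'rV[int]_n) x :
  pairing (\sum_(k < m) c k *: f k) x = \sum_(k < m) (c k)%:~R * pairing (f k) x.
Proof.
rewrite /pairing.
under eq_bigr => j _ do rewrite summxE rmorph_sum mulr_suml.
rewrite exchange_big /=; apply: eq_bigr => k _.
rewrite mulr_sumr; apply: eq_bigr => j _.
by rewrite mxE intrM mulrA.
Qed.

Lemma pairing_delta (j : 'I_n) x : pairing (delta_mx 0 j) x = x 0 j.
Proof.
rewrite /pairing (bigD1 j) //= big1 ?addr0; first by rewrite mxE !eqxx mul1r.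
move=> k kj; rewrite mxE eqxx /=.
by move: kj; case: eqP => //= _ _; rewrite mul0r.
Qed.

Lemma pairing_int u (z : 'rV[int]_n) :
  pairing u (map_mx (fun t : int => t%:~R) z) = (\sum_(j < n) u 0 j * z 0 j)%:~R :> R.
Proof.
rewrite /pairing rmorph_sum; apply: eq_bigr => j _.
by rewrite mxE /= intrM.
Qed.

End Aux.

Local Open Scope classical_set_scope.

Section Scale.
Variables (R : realType) (n r : nat) (rho : 'I_r -> 'rV[int]_n) (a : 'I_r -> int).

Lemma intr_natz (p : nat) : ((p%:Z)%:~R : R) = p%:R.
Proof. by []. Qed.

Lemma poly_dil (p : nat) (x : 'rV[R]_n) : (0 < p)%N ->
  polyh rho (dil a p%:Z) x <-> polyh rho a ((p%:R : R)^-1 *: x).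
Proof.
move=> p0; have k0 : (0 : R) < p%:R by rewrite ltr0n.
split=> h i; have := h i; rewrite /dil intrM pairingZ.
  by rewrite ler_pdivlMl // mulrN.
by rewrite ler_pdivlMl // mulrN.
Qed.

Lemma vertex_scale (S : set 'rV[R]_n) (k : R) m : k != 0 ->
  is_vertex S m -> is_vertex [set x | S (k^-1 *: x)] (k *: m).
Proof.
move=> k0 [Sm ext]; split; first by rewrite /= scalerA mulVf // scale1r.
move=> x y t Sx Sy t0 t1 e.
have : k^-1 *: x = k^-1 *: y.
  apply: (ext _ _ t) => //.
  by rewrite !scalerA ![_ * k^-1]mulrC -!scalerA -scalerDr -e scalerA mulVf // scale1r.
by move/(congr1 (fun v => k *: v)); rewrite !scalerA divff // !scale1r.
Qed.

Lemma vertex_dil (p : nat) (m : 'rV[R]_n) : (0 < p)%N ->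
  is_vertex (polyh rho a) m -> is_vertex (polyh rho (dil a p%:Z)) (p%:R *: m).
Proof.
move=> p0 /(@vertex_scale _ (p%:R : R)) h.
have -> : polyh rho (dil a p%:Z) = [set x | polyh rho a ((p%:R : R)^-1 *: x)].
  by rewrite predeqE => x; rewrite poly_dil.
by apply: h; rewrite pnatr_eq0 -lt0n.
Qed.

Lemma vertex_undil (p : nat) (m : 'rV[R]_n) : (0 < p)%N ->
  is_vertex (polyh rho (dil a p%:Z)) m -> is_vertex (polyh rho a) ((p%:R : R)^-1 *: m).
Proof.
move=> p0 /(@vertex_scale _ ((p%:R : R)^-1)) h.
have -> : polyh rho a = [set x | polyh rho (dil a p%:Z) (((p%:R : R)^-1)^-1 *: x)].
  rewrite predeqE => x /=; rewrite poly_dil // scalerA invrK mulVf ?scale1r //.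
  by rewrite pnatr_eq0 -lt0n.
by apply: h; rewrite invr_eq0 pnatr_eq0 -lt0n.
Qed.

Lemma tight_dil (p : nat) (m : 'rV[R]_n) i : (0 < p)%N ->
  (pairing (rho i) ((p%:R : R) *: m) = - (dil a p%:Z i)%:~R) <->
  (pairing (rho i) m = - (a i)%:~R).
Proof.
move=> p0; have k0 : (p%:R : R) != 0 by rewrite pnatr_eq0 -lt0n.
rewrite pairingZ /dil intrM -mulrN; split; last by move=> ->.
by move/(mulfI k0).
Qed.

End Scale.

Section Geo.
Variables (R : realType) (n r : nat) (rho : 'I_r -> 'rV[int]_n) (a : 'I_r -> int).
Local Notation P := (polyh rho a : set 'rV[R]_n).

Lemma ray_zero (y w : 'rV[R]_n) : bounded P -> P y ->
  (forall i, 0 <= pairing (rho i) w) -> w = 0.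
Proof.
move=> [B hB] Py hw; apply/rowP => j; rewrite mxE.
apply: NNPP => wj.
have B0 : 0 <= B by apply: le_trans (hB _ Py j).
have wj0 : 0 < `|w 0 j| by rewrite normr_gt0; apply/eqP.
pose l := (2 * B + 1) / `|w 0 j|.
have l0 : 0 <= l by rewrite divr_ge0 // addr_ge0 ?mulr_ge0.
have Pz : P (y + l *: w).
  move=> i; rewrite pairingD pairingZ; apply: le_trans (Py i) _.
  by rewrite lerDl mulr_ge0.
have := hB _ Pz j; rewrite !mxE.
have := lerB_normD (l * w 0 j) (y 0 j); rewrite normrM (ger0_norm l0).
rewrite /l divfK ?gt_eqF // addrC.
have := hB _ Py j; lra.
Qed.

Lemma no_ray (y w : 'rV[R]_n) : (0 < n)%N -> bounded P -> P y ->
  ~ (forall i, 1 <= pairing (rho i) w).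
Proof.
move=> n0 bP Py hw.
have w0 : w = 0 by apply: (ray_zero y w bP Py) => i; apply: le_trans (hw i).
case: (pickP (fun i : 'I_r => true)) => [i _|none].
  by have := hw i; rewrite w0 pairing0 ler10.
have := ray_zero y (const_mx 1) bP Py (fun i => ltac:(by have := none i)).
move/rowP/(_ (Ordinal n0)); rewrite !mxE => /eqP; rewrite oner_eq0.
done.
Qed.

Definition Tset (x : 'rV[R]_n) : {set 'I_r} :=
  [set i | pairing (rho i) x == - (a i)%:~R].

Lemma not_vertex_step (x : 'rV[R]_n) : bounded P -> P x -> ~ is_vertex P x ->
  exists x', P x' /\ (#|Tset x| < #|Tset x'|)%N.
Proof.
move=> bP Px nv.
have [y [z [t [Py [Pz [t0 [t1 [e yz]]]]]]]] : exists y z t, P y /\ P z /\ 0 < t /\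
   t < 1 /\ x = t *: y + (1 - t) *: z /\ y <> z.
  apply: NNPP => H; apply: nv; split=> // y z t Py Pz t0 t1 e.
  apply: NNPP => yz; apply: H; exists y, z, t; do !split => //.
pose w := y - z.
have w0 : w != 0 by rewrite subr_eq0; apply/eqP.
have tw : forall i, pairing (rho i) x = - (a i)%:~R -> pairing (rho i) w = 0.
  move=> i hi.
  have ha : 0 <= pairing (rho i) y + (a i)%:~R by have := Py i; lra.
  have hb : 0 <= pairing (rho i) z + (a i)%:~R by have := Pz i; lra.
  have hx : t * (pairing (rho i) y + (a i)%:~R) +
            (1 - t) * (pairing (rho i) z + (a i)%:~R) == 0.
    apply/eqP; move: hi; rewrite e pairingD !pairingZ; lra.
  rewrite paddr_eq0 ?mulr_ge0 // ?subr_ge0 ?ltW // !mulf_eq0 in hx.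
  move: hx; rewrite (gt_eqF t0) subr_eq0 (gt_eqF t1) /= => /andP[/eqP h1 /eqP h2].
  by rewrite /w pairingB; lra.
have [i1 wi1] : exists i, pairing (rho i) w < 0.
  apply: NNPP => H; move: w0; rewrite (ray_zero x w bP Px) ?eqxx //.
  move=> i; rewrite leNgt; apply/negP => h; apply: H; by exists i.
pose ratio i := (pairing (rho i) x + (a i)%:~R) / - pairing (rho i) w.
case: (@arg_minP _ _ _ i1 (fun i => pairing (rho i) w < 0) ratio wi1)
  => i0 wi0 mini0.
set l := ratio i0.
have l0 : 0 <= l.
  rewrite /l /ratio divr_ge0 //; first by have := Px i0; lra.
  by rewrite oppr_ge0 ltW.
exists (x + l *: w); split.
  move=> i; rewrite pairingD pairingZ.
  case: (leP 0 (pairing (rho i) w)) => hw.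
    by apply: le_trans (Px i) _; rewrite lerDl mulr_ge0.
  have := mini0 i hw; rewrite -/l /ratio ler_pdivlMr ?oppr_gt0 //.
  lra.
apply: proper_card; apply/properP; split.
  apply/fintype.subsetP => i; rewrite !inE pairingD pairingZ => /eqP hi.
  by rewrite tw // mulr0 addr0 hi.
exists i0.
  rewrite inE pairingD pairingZ /l /ratio invrN mulrN mulNr divfK; last by rewrite lt_eqF.
  by apply/eqP; lra.
rewrite inE; apply/negP => /eqP /tw h; move: wi0; rewrite h ltxx.
done.
Qed.

Lemma exists_vertex (x0 : 'rV[R]_n) : bounded P -> P x0 ->
  exists m, is_vertex P m.
Proof.
move=> bP Px0; apply: NNPP => nv.
have H : forall k : nat, exists x, P x /\ (k <= #|Tset x|)%N.
  elim=> [|k [x [Px hk]]]; first by exists x0.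
  have [x' [Px' hx']] := not_vertex_step x bP Px (fun v => nv (ex_intro _ x v)).
  by exists x'; split=> //; apply: leq_ltn_trans hx'.
have [x [_ hx]] := H r.+1.
have := max_card (mem (Tset x)); rewrite card_ord.
by move=> h; have := leq_trans hx h; rewrite ltnn.
Qed.

End Geo.
Arguments Tset {R n r} rho a x.

Section Basis.
Variables (R : realType) (n : nat) (f : 'I_n -> 'rV[int]_n).
Hypothesis Zb : Zbasis f.

Lemma zero_pairing (w : 'rV[R]_n) : (forall k, pairing (f k) w = 0) ->
  forall u, pairing u w = 0.
Proof.
move=> hw u; have [c ->] := Zb.1 u.
by rewrite pairing_sum big1 // => k _; rewrite hw mulr0.
Qed.

Lemma zero_vec (w : 'rV[R]_n) : (forall k, pairing (f k) w = 0) -> w = 0.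
Proof.
move=> hw; apply/rowP => j; rewrite mxE -pairing_delta.
exact: zero_pairing.
Qed.

Lemma exists_dual : exists z : 'rV[int]_n,
  forall k, pairing (f k) (map_mx (fun t : int => t%:~R) z) = 1 :> R.
Proof.
have hc : forall j : 'I_n, exists c : 'I_n -> int,
    delta_mx 0 j = \sum_(k < n) c k *: f k.
  by move=> j; have [c hc] := Zb.1 (delta_mx 0 j); exists c.
have [C hC] := choice hc.
pose Cm : 'M[int]_n := \matrix_(j, k) C j k.
pose Bm : 'M[int]_n := \matrix_(k, j) f k 0 j.
have CB : Cm *m Bm = 1%:M.
  apply/matrixP => j j'; rewrite !mxE.
  have := congr1 (fun M : 'rV[int]_n => M 0 j') (hC j); rewrite /= mxE summxE.
  rewrite eqxx /= eq_sym => ->; apply: eq_bigr => k _; by rewrite !mxE.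
have BC := mulmx1C CB.
exists (\row_j \sum_(k < n) C j k) => l.
rewrite pairing_int.
have -> : \sum_(j < n) f l 0 j * (\row_j0 \sum_(k < n) C j0 k) 0 j =
          \sum_(k < n) (Bm *m Cm) l k.
  under eq_bigr => j _ do rewrite mxE mulr_sumr.
  rewrite exchange_big /=; apply: eq_bigr => k _; rewrite mxE.
  by apply: eq_bigr => j _; rewrite !mxE.
rewrite BC (bigD1 l) //= big1 ?addr0; first by rewrite mxE eqxx.
by move=> k kl; rewrite mxE eq_sym (negbTE kl).
Qed.

End Basis.

Section Smooth.
Variables (R : realType) (n r : nat) (rho : 'I_r -> 'rV[int]_n) (a : 'I_r -> int).
Local Notation P := (polyh rho a : set 'rV[R]_n).
Hypothesis hs : smooth R rho a.

Definition tight (m : 'rV[R]_n) i := pairing (rho i) m = - (a i)%:~R.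
Definition Vset (m : 'rV[R]_n) : set 'rV[R]_n :=
  [set v | forall i, tight m i -> pairing (rho i) v = 1].
Definition Vof (m : 'rV[R]_n) := xget 0 (Vset m).
Definition ee (m : 'rV[R]_n) i := 1 - pairing (rho i) (Vof m).
Definition dd (m : 'rV[R]_n) i := pairing (rho i) m + (a i)%:~R.

Lemma vertex_zero (m w : 'rV[R]_n) : is_vertex P m ->
  (forall i, tight m i -> pairing (rho i) w = 0) ->
  (forall u, pairing u w = 0) /\ w = 0.
Proof.
move=> vm hw; have [e [_ he Zb]] := hs m vm.
have hk : forall k, pairing (rho (e k)) w = 0.
  by move=> k; apply: hw; apply/he; exists k.
by split; [exact: zero_pairing Zb w hk | exact: zero_vec Zb w hk].
Qed.

Lemma vertex_dual (m : 'rV[R]_n) : is_vertex P m ->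
  exists z : 'rV[int]_n, Vset m (map_mx (fun t : int => t%:~R) z).
Proof.
move=> vm; have [e [_ he Zb]] := hs m vm.
have [z hz] := @exists_dual R _ _ Zb; exists z => i /he [k <-].
exact: hz.
Qed.

Lemma Vof_in (m : 'rV[R]_n) : is_vertex P m -> Vset m (Vof m).
Proof. by move=> vm; apply: xgetPex; have [z hz] := vertex_dual m vm; exists (map_mx (fun t : int => t%:~R) z). Qed.

Lemma Vof_pairing (m v : 'rV[R]_n) : is_vertex P m -> Vset m v ->
  forall i, pairing (rho i) v = pairing (rho i) (Vof m).
Proof.
move=> vm hv i; have hV := Vof_in m vm.
have hw : forall j, tight m j -> pairing (rho j) (v - Vof m) = 0.
  by move=> j tj; rewrite pairingB hv // hV // subrr.
have [h _] := vertex_zero m (v - Vof m) vm hw.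
by apply/eqP; rewrite -subr_eq0 -pairingB h.
Qed.

Lemma vertex_inj (m m' : 'rV[R]_n) : is_vertex P m -> is_vertex P m' ->
  Tset rho a m = Tset rho a m' -> m = m'.
Proof.
move=> vm vm' eT.
have hw : forall j, tight m j -> pairing (rho j) (m - m') = 0.
  move=> j tj; have : j \in Tset rho a m by rewrite inE; apply/eqP.
  by rewrite eT inE => /eqP tj'; rewrite pairingB tj tj' subrr.
have [_ h] := vertex_zero m (m - m') vm hw.
by apply/eqP; rewrite -subr_eq0 h.
Qed.

End Smooth.

Lemma ratio_le (R : realType) (x y u v : R) : 0 < y -> 0 < v ->
  (x / y <= u / v) = (v * x <= u * y).
Proof.
move=> y0 v0; rewrite ler_pdivrMr // mulrAC ler_pdivlMr //.
by rewrite [x * v]mulrC.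
Qed.

Section Span.
Variables (R : realType) (n r : nat) (rho : 'I_r -> 'rV[int]_n) (a : 'I_r -> int).
Local Notation P := (polyh rho a : set 'rV[R]_n).
Hypothesis hs : smooth R rho a.

Lemma spanned_point (p q : nat) (m v : 'rV[R]_n) : (0 < p)%N ->
  spanned R rho (dil a p%:Z) q%:Z -> is_vertex P m -> Vset R n r rho a m v ->
  shiftP rho (dil a p%:Z) q%:Z (p%:R *: m + q%:R *: v).
Proof.
move=> p0 sp vm hv.
apply: (sp _ (vertex_dil R n r rho a p m p0 vm)) => j.
move/(tight_dil R n r rho a p m j p0) => tj.
rewrite pairingD !pairingZ tj (hv j tj) /dil intrM !intr_natz; lra.
Qed.

Lemma spanned_nec (p q : nat) : (0 < p)%N ->
  spanned R rho (dil a p%:Z) q%:Z -> forall m, is_vertex P m ->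
  forall i, q%:R * ee R n r rho a m i <= p%:R * dd R n r rho a m i.
Proof.
move=> p0 sp m vm i.
have [z hz] := vertex_dual R n r rho a hs m vm.
have := spanned_point p q m _ p0 sp vm hz i.
rewrite /dil intrB intrM !intr_natz pairingD !pairingZ.
rewrite /ee /dd -(Vof_pairing R n r rho a hs m _ vm hz i); lra.
Qed.

Lemma spanned_suff (p q : nat) : (0 < p)%N ->
  (forall m, is_vertex P m -> forall i, 0 < dd R n r rho a m i ->
     q%:R * ee R n r rho a m i <= p%:R * dd R n r rho a m i) ->
  spanned R rho (dil a p%:Z) q%:Z.
Proof.
move=> p0 H m' vm' x hx i.
pose m := (p%:R : R)^-1 *: m'.
have vm : is_vertex P m := vertex_undil R n r rho a p m' p0 vm'.
have em' : m' = p%:R *: m by rewrite /m scalerA divff ?scale1r // pnatr_eq0 -lt0n.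
clearbody m.
have hV := Vof_in R n r rho a hs m vm.
pose v := Vof R n r rho a m.
have hw : forall j, tight R n r rho a m j ->
    pairing (rho j) (x - (p%:R *: m + q%:R *: v)) = 0.
  move=> j tj.
  have tj' : pairing (rho j) m' = - (dil a p%:Z j)%:~R.
    by rewrite em'; apply/(tight_dil R n r rho a p m j p0).
  rewrite pairingB pairingD !pairingZ (hV j tj) tj (hx j tj') /dil intrM !intr_natz.
  lra.
have [hz _] := vertex_zero R n r rho a hs m _ vm hw.
have ex : pairing (rho i) x = p%:R * pairing (rho i) m + q%:R * pairing (rho i) v.
  by move: (hz (rho i)); rewrite pairingB pairingD !pairingZ; lra.
rewrite /dil intrB intrM !intr_natz ex.
case: (ltP 0 (dd R n r rho a m i)) => hd.
  by have := H m vm i hd; rewrite /ee /dd -/v; lra.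
have Pm := vm.1 i.
have tmi : tight R n r rho a m i by rewrite /tight; move: hd; rewrite /dd; lra.
by have := hV i tmi; rewrite -/v; move: tmi; rewrite /tight => -> ->; lra.
Qed.

End Span.

Local Close Scope classical_set_scope.

Theorem lemma2p4 (R : realType) (n r : nat)
    (rho : 'I_r -> 'rV[int]_n) (a : 'I_r -> int) (c : nat) :
  (0 < n)%N ->
  lattice_polytope_facets R rho a ->
  smooth R rho a ->
  is_codegree R rho a c ->
  (exists q : rat, 0 < q /\ nef_value R rho a = ratr q) /\
  c%:R - 1 < nef_value R rho a.
Proof.
move=> n0 hl hs [[xc [lc sc]] minc].
have [bP [[pts [Ppts _]] [latt _]]] := hl.
pose P := (Pilot.Defs.poly rho a : set 'rV[R]_n).
have Px0 : P (pts ord0) := Ppts ord0.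
have [m0 vm0] := exists_vertex R n r rho a (pts ord0) bP Px0.
pose EE := ee R n r rho a. pose DD := dd R n r rho a.
have dd_ge0 : forall m, P m -> forall i, 0 <= DD m i.
  by move=> m Pm i; have := Pm i; rewrite /DD /dd; lra.
have [i0 [d0 e0]] : exists i, 0 < DD m0 i /\ 0 < EE m0 i.
  apply: NNPP => H; apply: (no_ray R n r rho a m0 (Vof R n r rho a m0) n0 bP vm0.1).
  move=> i; have hV := Vof_in R n r rho a hs m0 vm0.
  case: (ltP 0 (DD m0 i)) => hd.
    case: (ltP 0 (EE m0 i)) => he; first by exfalso; apply: H; exists i.
    by move: he; rewrite /EE /ee; lra.
  have tmi : tight R n r rho a m0 i.
    by have := dd_ge0 _ vm0.1 i; move: hd; rewrite /tight /DD /dd; lra.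
  by rewrite (hV i tmi).
pose vtx (S : {set 'I_r}) :=
  xget 0 [set m | is_vertex P m /\ Tset rho a m = S].
have vtx_id : forall m, is_vertex P m -> vtx (Tset rho a m) = m.
  move=> m vm; apply: xget_unique => [|y [vy ey]]; first by split.
  exact: vertex_inj R n r rho a hs y m vy vm ey.
pose F (k : {set 'I_r} * 'I_r) := EE (vtx k.1) k.2 / DD (vtx k.1) k.2.
pose PP (k : {set 'I_r} * 'I_r) : bool :=
  `[< is_vertex P (vtx k.1) /\ 0 < DD (vtx k.1) k.2 >].
have PPk0 : PP (Tset rho a m0, i0) by apply/asboolP; rewrite /= vtx_id.
case: (@arg_maxP _ _ _ (Tset rho a m0, i0) PP F PPk0) => kM /asboolP [vM dM] maxk.
have bound : forall m, is_vertex P m -> forall i, 0 < DD m i ->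
    EE m i / DD m i <= F kM.
  move=> m vm i hd; have := maxk (Tset rho a m, i); rewrite /F /= vtx_id //.
  by apply; apply/asboolP; rewrite /= vtx_id.
have MgtO : 0 < F kM.
  apply: lt_le_trans (maxk _ PPk0); rewrite /F /= vtx_id //.
  by rewrite divr_gt0.
set mM := vtx kM.1 in vM dM maxk bound MgtO.
set iM := kM.2 in dM maxk bound MgtO.
have [zm ezm] := latt mM vM.
have [zv hzv] := vertex_dual R n r rho a hs mM vM.
pose D : int := \sum_(j < n) rho iM 0 j * zm 0 j + a iM.
pose E : int := 1 - \sum_(j < n) rho iM 0 j * zv 0 j.
have eD : DD mM iM = D%:~R by rewrite /DD /dd ezm pairing_int intrD.
have eE : EE mM iM = E%:~R.
  by rewrite /EE /ee -(Vof_pairing R n r rho a hs mM _ vM hzv iM) pairing_int intrB.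
have D0 : 0 < D by rewrite -(ltr0z R) -eD.
have E0 : 0 < E.
  rewrite -(ltr0z R); move: MgtO; rewrite /F -/mM -/iM eE eD.
  by rewrite pmulr_lgt0 // invr_gt0 ltr0z.
pose pM := `|E|%N. pose qM := `|D|%N.
have pM0 : (0 < pM)%N by rewrite absz_gt0 gt_eqF.
have qM0 : (0 < qM)%N by rewrite absz_gt0 gt_eqF.
have epM : (pM%:R : R) = E%:~R by rewrite natr_absz ger0_norm ?ltW.
have eqM : (qM%:R : R) = D%:~R by rewrite natr_absz ger0_norm ?ltW.
have eM : F kM = pM%:R / qM%:R by rewrite /F -/mM -/iM eE eD epM eqM.
have qMR : (0 : R) < qM%:R by rewrite ltr0n.
rewrite /nef_value; set Q := (X in inf X).
have Mlb : forall t, Q t -> F kM <= t.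
  move=> t [p [q [p0 q0 -> sp]]].
  rewrite /F -/mM -/iM ratio_le ?ltr0n //.
  exact: spanned_nec R n r rho a hs p q p0 sp mM vM iM.
have MQ : Q (F kM).
  exists pM, qM; split=> //.
  apply: (spanned_suff R n r rho a hs pM qM pM0) => m vm i hd.
  by have := bound m vm i hd; rewrite eM ratio_le.
have tauE : inf Q = F kM.
  apply/le_anti/andP; split.
    by apply: ge_inf MQ; exists (F kM) => t Qt; exact: Mlb.
  by apply: lb_le_inf; [exists (F kM) | move=> t Qt; exact: Mlb].
rewrite tauE; split.
  exists (pM%:R / qM%:R); split; first by rewrite divr_gt0 ?ltr0n.
  by rewrite eM fmorph_div /= !ratr_nat.
have c0 : (0 < c)%N.
  rewrite lt0n; apply/eqP => c0; move: sc; rewrite c0 => sc.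
  apply: (no_ray R n r rho a (pts ord0) xc n0 bP Px0) => i.
  have := sc i; rewrite /dil mul0r sub0r intrN opprK.
  done.
rewrite ltNge; apply/negP => hMc.
move: minc sc c0 hMc; case: c => [//|[|k]] minc sc _ hMc.
  by move: hMc; rewrite subrr; lra.
have hk : F kM <= k.+1%:R by move: hMc; rewrite -natr1 addrK.
have sp : spanned R rho (dil a k.+1%:Z) 1%:Z.
  apply: (spanned_suff R n r rho a hs k.+1 1 erefl) => m vm i hd.
  have := bound m vm i hd; rewrite ler_pdivrMr // mul1r => h.
  by apply: le_trans h _; rewrite ler_pM2r.
have [zv0 hz0] := vertex_dual R n r rho a hs m0 vm0.
have := spanned_point R n r rho a k.+1 1 m0 _ erefl sp vm0 hz0.
move=> sx; apply: (minc k.+1 (ltnSn _)).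
eexists; split; last exact: sx.
have [zm0 ezm0] := latt m0 vm0.
exists (k.+1%:Z *: zm0 + zv0); apply/rowP => j.
by rewrite ezm0 !mxE intrD intrM mul1r.
Qed.
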